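(* Let $\ell_1$ and $\ell_2$ be log-scales on topological spaces $X_1$ and $X_2$, respectively. Suppose that $X_1$ is compact and that $\ell_2$ is positive. If $f:X_1\to X_2$ is locally Lipschitz, then $f$ is Lipschitz.
   Context: A log-scale on a set $X$ is a function $\ell:X\times X\to\mathbb{R}\cup\{\infty\}$ such that $\ell(x,y)=\ell(y,x)$, $\ell(x,y)=+\infty$ iff $x=y$, and for some $\delta\ge0$, $\ell(x,z)\ge\min(\ell(x,y),\ell(y,z))-\delta$ for all $x,y,z$. When a log-scale is given on a topological space, it is assumed that the topology it defines (i.e. the topology of a metric $|\cdot|$ satisfying $c^{-1}\alpha^{\ell(x,y)}\le |x-y|\le c\alpha^{\ell(x,y)}$ for some constants $0<\alpha<1$, $c>1$) coincides with the given topology. A log-scale is positive if all its values are positive. A map $f:X_1\to X_2$ is Lipschitz if there is $n>0$ with $\ell_2(f(x),f(y))\ge\ell_1(x,y)-n$ for all $x,y\in X_1$; it is locally Lipschitz if every $x\in X_1$ has a neighborhood $U$ such that $f|_U$ is Lipschitz. *)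

(* Defs.v *)
From HB Require Import structures.
From mathcomp Require Import all_boot all_order all_algebra.
From mathcomp Require Import all_classical all_reals all_analysis.
Set Implicit Arguments. Unset Strict Implicit. Unset Printing Implicit Defensive.
Import Order.TTheory GRing.Theory Num.Theory.
Local Open Scope classical_set_scope.
Local Open Scope ring_scope.

Definition is_log_scale (R : realType) (X : Type) (l : X -> X -> \bar R) : Prop :=
  [/\ (forall x y, l x y <> -oo%E),
      (forall x y, l x y = l y x),
      (forall x y, l x y = +oo%E <-> x = y) &
      exists2 delta : R, 0 <= delta &
        forall x y z, (Order.min (l x y) (l y z) - delta%:E <= l x z)%E].

Definition is_metric (R : realType) (X : Type) (d : X -> X -> R) : Prop :=
  [/\ (forall x y, 0 <= d x y),
      (forall x y, d x y = 0 <-> x = y),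
      (forall x y, d x y = d y x) &
      (forall x y z, d x z <= d x y + d y z)].

(* The topology defined by the log-scale l coincides with the topology of X:
   there is a metric d with c^-1 alpha^l(x,y) <= d(x,y) <= c alpha^l(x,y)
   (for x <> y; for x = y both sides are 0 with alpha^(+oo) = 0), for some
   0 < alpha < 1, c > 1, and the open sets of X are exactly the metric-open sets. *)
Definition log_scale_compatible (R : realType) (X : topologicalType)
    (l : X -> X -> \bar R) : Prop :=
  exists d : X -> X -> R, exists alpha : R, exists c : R,
    [/\ is_metric d, 0 < alpha < 1, 1 < c,
        (forall x y, x <> y ->
           c^-1 * alpha `^ (fine (l x y)) <= d x y /\
           d x y <= c * alpha `^ (fine (l x y))) &
        (forall A : set X, open A <->
           (forall x, A x -> exists2 e : R, 0 < e & [set y | d x y < e] `<=` A))].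

Definition top_log_scale (R : realType) (X : topologicalType)
    (l : X -> X -> \bar R) : Prop :=
  is_log_scale l /\ log_scale_compatible l.

Definition positive_log_scale (R : realType) (X : Type) (l : X -> X -> \bar R) : Prop :=
  forall x y, (0 < l x y)%E.

Definition ls_lipschitz_on (R : realType) (X1 X2 : Type)
    (l1 : X1 -> X1 -> \bar R) (l2 : X2 -> X2 -> \bar R) (f : X1 -> X2) (U : set X1) : Prop :=
  exists2 n : R, 0 < n &
    forall x y, U x -> U y -> (l1 x y - n%:E <= l2 (f x) (f y))%E.

Definition ls_lipschitz (R : realType) (X1 X2 : Type)
    (l1 : X1 -> X1 -> \bar R) (l2 : X2 -> X2 -> \bar R) (f : X1 -> X2) : Prop :=
  ls_lipschitz_on l1 l2 f setT.

Definition ls_locally_lipschitz (R : realType) (X1 : topologicalType) (X2 : Type)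
    (l1 : X1 -> X1 -> \bar R) (l2 : X2 -> X2 -> \bar R) (f : X1 -> X2) : Prop :=
  forall x : X1, exists2 U : set X1, nbhs x U & ls_lipschitz_on l1 l2 f U.

(* Main.v *)
Require Import Defs.
From mathcomp Require Import all_boot all_order all_algebra.
From mathcomp Require Import all_classical all_reals all_analysis.
From mathcomp Require Import lra ring.
Local Open Scope classical_set_scope.
Import Order.TTheory GRing.Theory Num.Theory.
Local Open Scope ring_scope.

Lemma fin_bound (R : realType) (T : eqType) (e n : T -> R) (s : seq T) :
  (forall i, 0 < e i) ->
  exists eps : R, exists N : R, [/\ (0 < eps)%R, (0 < N)%R &
     forall i, i \in s -> (eps <= e i)%R /\ (n i <= N)%R].
Proof.
move=> e0; elim: s => [|a s [eps [N [eps0 N0 H]]]].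
  by exists 1%R, 1%R; split => //.
exists (Num.min eps (e a)), (Num.max N (n a)); split.
- by rewrite lt_min eps0 e0.
- by rewrite lt_max N0.
move=> i; rewrite inE => /orP [/eqP ->|/H [h1 h2]].
  by rewrite !ge_min !le_max !lexx !orbT.
by rewrite ge_min le_max h1 h2 /=; split=> //; apply: (le_trans h2); rewrite le_max lexx.
Qed.

Theorem lemma1p1p7 (R : realType) (X1 X2 : topologicalType)
    (l1 : X1 -> X1 -> \bar R) (l2 : X2 -> X2 -> \bar R) (f : X1 -> X2) :
  top_log_scale l1 -> top_log_scale l2 ->
  compact (@setT X1) -> positive_log_scale l2 ->
  ls_locally_lipschitz l1 l2 f -> ls_lipschitz l1 l2 f.
Proof.
move=> [[l1noo _ l1oo _] [d [alpha [c [[d0 dxx dsym dtri] /andP[a0 a1] c1 hd hop]]]]].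
move=> _ cpt pos2 hLL.
have ballo : forall x (r : R), open [set y | (d x y < r)%R].
  move=> x r; apply/hop => y /= hy; exists (r - d x y)%R; first by rewrite subr_gt0.
  move=> z /= hz; apply: (le_lt_trans (dtri x y z)).
  by rewrite -ltrBrDl.
have loc : forall x, exists p : R * R, [/\ (0 < p.1)%R, (0 < p.2)%R &
   forall y z, (d x y < p.1)%R -> (d x z < p.1)%R ->
     (l1 y z - (p.2)%:E <= l2 (f y) (f z))%E].
  move=> x; have [U nU [n n0 hn]] := hLL x.
  move: nU; rewrite nbhsE => -[B [oB Bx] BU].
  have [e e0 he] := (proj1 (hop B) oB) x Bx.
  exists (e, n); split => // y z hy hz.
  by apply: hn; apply: BU; apply: he.
have [g hg] := choice loc.
have nc := (proj1 (compact_near_coveringP _) cpt) nat \oo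
  (fun k y => forall z, d y z < k.+1%:R^-1 ->
      (l1 y z - (k.+1%:R)%:E <= l2 (f y) (f z))%E) _.
have [K _ HK] : \forall k \near \oo, setT `<=` (fun y => forall z, d y z < k.+1%:R^-1 ->
      (l1 y z - (k.+1%:R)%:E <= l2 (f y) (f z))%E).
  apply: nc => x _.
  have [e0 n0 hx] := hg x.
  have e20 : 0 < (g x).1 / 2 by rewrite divr_gt0.
  exists ([set y | d x y < (g x).1 / 2],
          [set k : nat | k.+1%:R^-1 < (g x).1 / 2 /\ (g x).2 <= k.+1%:R]).
    split.
      apply: open_nbhs_nbhs; split; first exact: ballo.
      by rewrite /= (proj2 (dxx x x) erefl).
    apply: filterI; first exact: (near_infty_natSinv_lt (PosNum e20)).
    have := nbhs_infty_ger (g x).2; apply: filterS => k /= hk.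
    by apply: (le_trans hk); rewrite ler_nat.
  move=> [y k] [/= hy [hk1 hk2]] z hz.
  apply: (le_trans _ (hx y z _ _)).
  - by rewrite -EFinN; apply: leeD2l; rewrite lee_fin lerN2.
  - by move: hy e0; lra.
  - apply: (le_lt_trans (dtri x y z)).
    by move: hy hz hk1; set t := (k.+1%:R^-1 : R); lra.
have {}HK := HK K (leqnn K).
set eps := (K.+1%:R^-1 : R) in HK.
have eps0 : 0 < eps by rewrite invr_gt0 ltr0Sn.
have lna0 : ln alpha < 0 by apply: ln_lt0; rewrite a0 a1.
have c0 : 0 < c by apply: lt_trans c1.
pose L := ln (eps / (2 * c)) / ln alpha.
have aL : alpha `^ L = eps / (2 * c).
  rewrite /powR (gt_eqF a0) /L -mulrA mulVf ?mulr1; last by rewrite (lt_eqF lna0).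
  by rewrite lnK // posrE divr_gt0 // mulr_gt0.
exists (Num.max K.+1%:R L); first by rewrite lt_max ltr0Sn.
move=> y z _ _.
have [hdz|hdz] := ltP (d y z) eps.
  apply: (le_trans _ (HK y I z hdz)).
  by apply: leeD2l; rewrite -EFinN lee_fin lerN2 le_max lexx.
have yz : y <> z.
  by move=> eyz; move: hdz; rewrite (proj2 (dxx y z) eyz) leNgt eps0.
have [_ hup] := hd y z yz.
case El: (l1 y z) => [r| |]; last first.
- by have := l1noo y z; rewrite El.
- by have := proj1 (l1oo y z) El.
rewrite El /= in hup.
have rL : r <= L.
  rewrite leNgt; apply/negP => hL.
  have a01 : 0 < alpha <= 1 by rewrite a0 ltW.
  have := ger_powR a01 (ltW hL); rewrite aL => har.
  have : d y z <= c * (eps / (2 * c)).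
    by apply: (le_trans hup); rewrite ler_pM2l.
  have -> : c * (eps / (2 * c)) = eps / 2.
    by field; rewrite (gt_eqF c0).
  move=> h2.
  by move: hdz h2 eps0; lra.
apply: (le_trans _ (ltW (pos2 (f y) (f z)))).
rewrite -EFinB lee_fin subr_le0 le_max; apply/orP; right; exact: rL.
Qed.
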